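(* $\mu(\mathit{CCC}_3)=6$; e.g., $\{[0,100],[1,110],[1,000],[0,001],[1,111],[0,011]\}$ is a mutual-visibility set of $\mathit{CCC}_3$.
   Context: Binary strings $x=x_0x_1\cdots x_{d-1}$ have positions $0,\dots,d-1$ from left to right; $x(i)$ denotes $x$ with bit $i$ complemented. $\mathit{CCC}_d$ ($d\ge 3$) has vertex set $\{[\ell,x]:\ell\in\{0,\dots,d-1\},\ x\in\{0,1\}^d\}$; $[\ell,x]$ and $[\ell',x']$ are adjacent iff either $x=x'$ and $\ell'\equiv\ell\pm1\pmod d$, or $\ell=\ell'$ and $x'=x(\ell)$. For a connected graph $G$ and $X\subseteq V(G)$, two vertices $x,y$ are $X$-visible if some shortest $x,y$-path has no internal vertex in $X$; $X$ is a mutual-visibility set if every two vertices of $X$ are $X$-visible; $\mu(G)$ is the maximum size of a mutual-visibility set. *)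

(* Defs.v *)
From mathcomp Require Import all_boot.
From mathcomp Require Import boolp.
Set Implicit Arguments. Unset Strict Implicit. Unset Printing Implicit Defensive.

(* Vertices of CCC_d: pairs [l, x] with l : 'I_d and x a binary string of
   length d, encoded as a finite function 'I_d -> bool (x i = bit at position i). *)
Definition ccc_vertex (d : nat) : finType := ('I_d * {ffun 'I_d -> bool})%type.

Definition flip (d : nat) (x : {ffun 'I_d -> bool}) (i : 'I_d) : {ffun 'I_d -> bool} :=
  [ffun j => if j == i then ~~ x j else x j].

Definition ccc_adj (d : nat) : rel (ccc_vertex d) :=
  fun u v =>
    ((u.2 == v.2) &&
      ((nat_of_ord v.1 == (u.1 + 1) %% d) || (nat_of_ord u.1 == (v.1 + 1) %% d)))
    || ((u.1 == v.1) && (v.2 == flip u.2 u.1)).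

Section Visibility.
Variable T : finType.
Variable e : rel T.

(* a walk from x is a sequence p with path e x p; it ends at last x p and has
   length size p.  Its internal vertices are all vertices except x and last. *)
Definition internal (x : T) (p : seq T) : seq T := behead (belast x p).

Definition shortest_path (x y : T) (p : seq T) : bool :=
  [&& path e x p, last x p == y &
      [forall n : 'I_(size p), ~~ [exists q : n.-tuple T,
          path e x q && (last x q == y)]]].

Definition visible (X : {set T}) (x y : T) : Prop :=
  exists p, shortest_path x y p /\ all (fun v => v \notin X) (internal x p).

Definition mutual_visibility (X : {set T}) : Prop :=
  forall x y, x \in X -> y \in X -> visible X x y.

Definition mu : nat :=
  \max_(X : {set T} | `[< mutual_visibility X >]) #|X|.
End Visibility.

Definition bits3 (b0 b1 b2 : bool) : {ffun 'I_3 -> bool} :=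
  [ffun i : 'I_3 => nth false [:: b0; b1; b2] i].

Definition v3 (l : nat) (b0 b1 b2 : bool) : ccc_vertex 3 :=
  (inord l, bits3 b0 b1 b2).

(* Main.v *)
Require Import Defs.
From mathcomp Require Import all_boot.
From mathcomp Require Import boolp zify.
Set Implicit Arguments. Unset Strict Implicit. Unset Printing Implicit Defensive.

Definition flipn (x l : nat) := if odd (x %/ 2 ^ l) then x - 2 ^ l else x + 2 ^ l.
Definition adjn (a b : nat) : bool :=
  [&& a < 24, b < 24 &
   ((a %/ 3 == b %/ 3) && ((b %% 3 == (a %% 3 + 1) %% 3) || (a %% 3 == (b %% 3 + 1) %% 3)))
   || ((a %% 3 == b %% 3) && (b %/ 3 == flipn (a %/ 3) (a %% 3)))].
Definition nbrn (a : nat) : seq nat := [seq b <- iota 0 24 | adjn a b].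
Definition nbrT := Eval vm_compute in [seq nbrn a | a <- iota 0 24].
Definition nbrf (a : nat) : seq nat := nth [::] nbrT a.

Lemma nbrT_ok : all (fun a => nbrn a == nth [::] nbrT a) (iota 0 24).
Proof. by vm_compute. Qed.

Lemma mem_nbrf a b : (b \in nbrf a) = adjn a b.
Proof.
case: (ltnP a 24) => ha.
  have := allP nbrT_ok a; rewrite mem_iota /= => /(_ ha) /eqP; rewrite /nbrf => <-.
  rewrite mem_filter mem_iota /=; case H: (adjn a b) => //=.
  by case/and3P: H.
rewrite /nbrf nth_default; last by rewrite /nbrT.
by rewrite /adjn ltnNge ha.
Qed.

Fixpoint walksn (k a : nat) : seq (seq nat) :=
  if k is k'.+1 then [seq b :: q | b <- nbrf a, q <- walksn k' b] else [:: [::]].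
Definition internal' (x : nat) (p : seq nat) := behead (belast x p).
Definition reachn (a b k : nat) := has (fun q => last a q == b) (walksn k a).
Definition distn (a b : nat) := find (reachn a b) (iota 0 7).
Definition goodn (B : pred nat) a b q := (last a q == b) && all (fun c => ~~ B c) (internal' a q).
Definition tabf (a b : nat) : seq (seq nat) :=
  [seq internal' a q | q <- walksn (distn a b) a & last a q == b].
Definition Tabf := [seq [seq tabf a b | b <- iota 0 24] | a <- iota 0 24].
Definition Tab := Eval vm_compute in Tabf.
Lemma TabE : Tab = Tabf. Proof. vm_compute. reflexivity. Qed.
Lemma distok : all (fun a => all (fun b => reachn a b (distn a b)) (iota 0 24)) (iota 0 24).
Proof. by vm_compute. Qed.

Definition visb (Bv : seq bool) a b :=
  has (all (fun c => ~~ nth false Bv c)) (nth [::] (nth [::] Tab a) b).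
Fixpoint mvp (Bv : seq bool) (L : seq nat) :=
  if L is a :: L' then all (visb Bv a) L' && mvp Bv L' else true.
Definition bvec (L : seq nat) := foldr (fun c bv => set_nth false bv c true) (nseq 24 false) L.
Definition mvn (L : seq nat) := mvp (bvec L) L.
Fixpoint ok (k : nat) (cur : seq nat) (start : nat) : bool :=
  if k is k'.+1 then
    all (fun v => ~~ mvn (rcons cur v) || ok k' (rcons cur v) v.+1) (iota start (24 - start))
  else false.

Lemma ok7 : ok 7 [::] 0. Proof. vm_cast_no_check (erefl true). Qed.

Lemma okP k cur start t : ok k cur start -> size t = k -> sorted ltn t ->
  all (fun v => start <= v < 24) t -> (forall m, mvn (cur ++ take m t)) -> False.
Proof.
elim: k cur start t => [|k IH] cur start t //=.
case: t => [|v t] //= Hok [Hs] Hsort /andP [/andP [Hv1 Hv2] Hall] Hm.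
have Hv : v \in iota start (24 - start) by rewrite mem_iota Hv1 subnKC // (leq_trans Hv1) // ltnW.
have := allP Hok v Hv.
have -> : mvn (rcons cur v) by have := Hm 1; rewrite /= take0 cats1.
move=> /= Hok'.
apply: (IH _ _ t Hok' Hs (path_sorted Hsort)).
  have Hmin := order_path_min ltn_trans Hsort.
  apply/allP => w Hw; move: (allP Hall w Hw) => /andP [_ ->].
  by rewrite (allP Hmin w Hw).
by move=> m; rewrite cat_rcons; apply: (Hm m.+1).
Qed.

Lemma nth_bvec L c : all (fun c => c < 24) L -> nth false (bvec L) c = (c \in L).
Proof.
move=> _; rewrite /bvec; elim: L => [|a L IH]; first by rewrite nth_nseq if_same.
change (nth false (set_nth false (foldr (fun c bv => set_nth false bv c true)
  (nseq 24 false) L) a true) c = (c \in a :: L)).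
by rewrite nth_set_nth in_cons -IH /=; case: (c == a).
Qed.

Lemma visb_mono L s a b : all (fun c => c < 24) L -> all (fun c => c < 24) s ->
  {subset s <= L} -> visb (bvec L) a b -> visb (bvec s) a b.
Proof.
move=> HL Hs sub /hasP [m Hm Hall]; apply/hasP; exists m => //.
apply/allP => c /(allP Hall); rewrite !nth_bvec //.
by apply: contra => /sub.
Qed.

Lemma mvp_of Bv L : (forall a b, a \in L -> b \in L -> visb Bv a b) -> mvp Bv L.
Proof.
elim: L => [|a L IH] //= H; apply/andP; split.
  by apply/allP => b Hb; apply: H; rewrite inE ?eqxx ?Hb ?orbT.
by apply: IH => x y Hx Hy; apply: H; rewrite inE ?Hx ?Hy orbT.
Qed.

Lemma no7 L : sorted ltn L -> all (fun c => c < 24) L -> 7 <= size L ->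
  (forall a b, a \in L -> b \in L -> visb (bvec L) a b) -> False.
Proof.
move=> Hs HL Hsz Hv.
have Hsub m : {subset take m (take 7 L) <= L}.
  by move=> x /mem_take /mem_take.
apply: (okP ok7 (t := take 7 L)).
- rewrite size_take; case: (ltnP 7 (size L)) => // H.
  by apply/eqP; rewrite eqn_leq H Hsz.
- exact: take_sorted.
- by apply/allP => x /mem_take /(allP HL) ->.
move=> m /=; rewrite /mvn; apply: mvp_of => a b Ha Hb.
have Hs' : all (fun c => c < 24) (take m (take 7 L)).
  by apply/allP => x /Hsub /(allP HL).
by apply: (visb_mono HL Hs' (Hsub m)); apply: (Hv a b (Hsub m a Ha) (Hsub m b Hb)).
Qed.

Notation T := (ccc_vertex 3).
Definition o0 : 'I_3 := @Ordinal 3 0 isT.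
Definition o1 : 'I_3 := @Ordinal 3 1 isT.
Definition o2 : 'I_3 := @Ordinal 3 2 isT.

Lemma ord3P (P : 'I_3 -> Prop) : P o0 -> P o1 -> P o2 -> forall i, P i.
Proof.
move=> H0 H1 H2 [[|[|[|m]]] Hi] //.
- by have -> : Ordinal Hi = o0 by apply: val_inj.
- by have -> : Ordinal Hi = o1 by apply: val_inj.
- by have -> : Ordinal Hi = o2 by apply: val_inj.
Qed.

Definition xcode (x : {ffun 'I_3 -> bool}) : nat := x o0 + 2 * x o1 + 4 * x o2.
Definition code (u : T) : nat := u.1 + 3 * xcode u.2.
Definition decode (a : nat) : T :=
  (inord (a %% 3), [ffun i : 'I_3 => odd ((a %/ 3) %/ 2 ^ i)]).

Lemma xcode_lt x : xcode x < 8.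
Proof. by rewrite /xcode; move: (x o0) (x o1) (x o2) => [] [] []. Qed.

Lemma code_mod u : code u %% 3 = u.1.
Proof. rewrite /code; have := ltn_ord u.1; move: (nat_of_ord u.1) (xcode u.2) => m n; lia. Qed.

Lemma code_div u : code u %/ 3 = xcode u.2.
Proof. rewrite /code; have := ltn_ord u.1; move: (nat_of_ord u.1) (xcode u.2) => m n; lia. Qed.

Lemma code_lt u : code u < 24.
Proof.
rewrite /code; have := xcode_lt u.2; have := ltn_ord u.1.
move: (xcode u.2) (nat_of_ord u.1) => m n Hn Hm.
lia.
Qed.

Lemma xcode_inj : injective xcode.
Proof.
move=> x y H; apply/ffunP; apply: ord3P; move: H; rewrite /xcode;
  move: (x o0) (x o1) (x o2) (y o0) (y o1) (y o2) => [] [] [] [] [] [];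
  by move/eqP.
Qed.

Lemma codeK : cancel code decode.
Proof.
move=> [l x]; rewrite /decode code_mod code_div /=; congr pair.
  by apply: val_inj; rewrite /= inordK.
apply/ffunP; apply: ord3P; rewrite !ffunE /xcode;
  move: (x o0) (x o1) (x o2) => [] [] []; by vm_compute.
Qed.

Lemma code_inj : injective code. Proof. exact: can_inj codeK. Qed.

Lemma decodeK a : a < 24 -> code (decode a) = a.
Proof.
move=> ha; do 24 (case: a ha => [|a] ha;
  [by rewrite /code /xcode /decode !ffunE /= inordK |]).
by [].
Qed.

Lemma xcode_flip x l : xcode (flip x l) = flipn (xcode x) l.
Proof.
move: l; apply: ord3P; rewrite /xcode /flip !ffunE /=;
  move: (x o0) (x o1) (x o2) => [] [] []; by vm_compute.
Qed.

Lemma adj_code u v : ccc_adj u v = adjn (code u) (code v).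
Proof.
rewrite /adjn !code_lt !code_mod !code_div /ccc_adj /=.
rewrite -xcode_flip !(inj_eq xcode_inj).
by [].
Qed.

Lemma path_code x p : path (@ccc_adj 3) x p = path adjn (code x) (map code p).
Proof. by rewrite path_map; apply: eq_path => u v; rewrite /= adj_code. Qed.

Lemma path_lt a q : path adjn a q -> all (fun c => c < 24) q.
Proof.
elim: q a => [|b q IH] a //= /andP [/and3P [_ -> _] H] /=; exact: IH H.
Qed.

Lemma mem_walksn k a q : (q \in walksn k a) = (size q == k) && path adjn a q.
Proof.
elim: k a q => [|k IH] a q /=.
  by case: q.
case: q => [|b q] /=.
  by apply/negbTE/allpairsPdep => -[x [y [_ _]]].
apply/allpairsPdep/idP => [[b' [q' [Hb Hq [Eb Eq]]]]|].
  subst b' q'; move: Hq Hb; rewrite IH mem_nbrf => /andP [Hs Hp] Hab.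
  by rewrite eqSS Hs Hab Hp.
move=> /and3P [Hs Hb Hq]; exists b, q; split => //.
  by rewrite mem_nbrf.
by rewrite IH -eqSS Hs.
Qed.

Lemma internal_code x p : internal' (code x) (map code p) = map code (internal x p).
Proof. by rewrite /internal' /internal belast_map behead_map. Qed.

Lemma decodes_map q : all (fun c => c < 24) q -> map code (map decode q) = q.
Proof.
move=> H; rewrite -map_comp; rewrite -[RHS]map_id; apply/eq_in_map => c Hc /=.
exact: decodeK (allP H c Hc).
Qed.

Lemma tupleE x y n :
  [exists q : n.-tuple T, path (@ccc_adj 3) x q && (last x q == y)] =
  reachn (code x) (code y) n.
Proof.
apply/existsP/hasP => [[q /andP [Hp /eqP Hl]]|[q' Hq' /eqP Hl]].
  exists (map code q).
    by rewrite mem_walksn size_map size_tuple eqxx -path_code.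
  by rewrite last_map Hl.
move: Hq'; rewrite mem_walksn => /andP [/eqP Hs Hp].
have Hm := decodes_map (path_lt Hp).
have Hsz : size (map decode q') == n by rewrite size_map Hs.
exists (Tuple Hsz) => /=.
rewrite path_code Hm Hp /=; apply/eqP/code_inj.
by rewrite -last_map Hm.
Qed.

Lemma dist_props a b : a < 24 -> b < 24 ->
  reachn a b (distn a b) /\ forall n, n < distn a b -> ~~ reachn a b n.
Proof.
move=> ha hb; split.
  have Ha : a \in iota 0 24 by rewrite mem_iota.
  have Hb : b \in iota 0 24 by rewrite mem_iota.
  exact: (allP (allP distok a Ha) b Hb).
move=> n Hn; have H7 : n < 7.
  by apply: (leq_trans Hn); have := find_size (reachn a b) (iota 0 7); rewrite size_iota.
by have := before_find 0 Hn; rewrite nth_iota // => ->.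
Qed.

Lemma visibleE (X : {set T}) (B : pred nat) x y : (forall v, B (code v) = (v \in X)) ->
  visible (@ccc_adj 3) X x y <->
  has (goodn B (code x) (code y)) (walksn (distn (code x) (code y)) (code x)).
Proof.
move=> HB; have [Hr Hmin] := dist_props (code_lt x) (code_lt y).
split.
- move=> [p [/and3P [Hp /eqP Hl /forallP Hsh] Hall]].
  have Hreach : reachn (code x) (code y) (size p).
    by rewrite -tupleE; apply/existsP; exists (in_tuple p); rewrite Hp Hl eqxx.
  have Hk : size p = distn (code x) (code y).
    apply/eqP; rewrite eqn_leq; apply/andP; split.
    + rewrite leqNgt; apply/negP => H; have := Hsh (Ordinal H).
      by rewrite /= tupleE Hr.
    + rewrite leqNgt; apply/negP => H; by have := Hmin _ H; rewrite Hreach.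
  apply/hasP; exists (map code p).
    by rewrite mem_walksn size_map Hk eqxx -path_code.
  rewrite /goodn last_map Hl eqxx internal_code all_map /=.
  apply/allP => v Hv /=; rewrite HB; exact: (allP Hall v Hv).
- move=> /hasP [q Hq /andP [/eqP Hl Hall]].
  move: Hq; rewrite mem_walksn => /andP [/eqP Hs Hp].
  have Hm := decodes_map (path_lt Hp).
  exists (map decode q); split.
    apply/and3P; split.
    + by rewrite path_code Hm.
    + by apply/eqP/code_inj; rewrite -last_map Hm.
    + apply/forallP => n; rewrite tupleE; apply: Hmin.
      by rewrite -Hs -(size_map decode).
  apply/allP => v Hv.
  have : code v \in internal' (code x) q by rewrite -Hm internal_code map_f.
  by move/(allP Hall); rewrite HB.
Qed.

Lemma goodn_visb L a b : all (fun c => c < 24) L -> a < 24 -> b < 24 ->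
  has (goodn (mem L) a b) (walksn (distn a b) a) = visb (bvec L) a b.
Proof.
move=> HL ha hb.
rewrite /visb TabE /Tabf (nth_map 0) ?size_iota // nth_iota //.
rewrite (nth_map 0) ?size_iota // nth_iota // /tabf.
apply/hasP/hasP => [[q Hq /andP [Hl Hall]]|[m /mapP [q]]].
  exists (internal' a q); first by apply: map_f; rewrite mem_filter Hl.
  by apply/allP => c /(allP Hall); rewrite nth_bvec.
rewrite mem_filter => /andP [Hl Hq] -> Hall; exists q => //.
by rewrite /goodn Hl; apply/allP => c /(allP Hall); rewrite nth_bvec.
Qed.

Definition Lof (X : {set T}) := [seq c <- iota 0 24 | decode c \in X].

Lemma Lof_code (X : {set T}) v : (code v \in Lof X) = (v \in X).
Proof. by rewrite /Lof mem_filter codeK mem_iota add0n leq0n code_lt /= andbT. Qed.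

Lemma Lof_lt (X : {set T}) : all (fun c => c < 24) (Lof X).
Proof. by apply/allP => c; rewrite /Lof mem_filter mem_iota => /andP [_ /andP [_ ->]]. Qed.

Lemma card_Lof (X : {set T}) : #|X| <= size (Lof X).
Proof.
rewrite cardE -(size_map code); apply: uniq_leq_size.
  by rewrite (map_inj_uniq code_inj) enum_uniq.
by move=> c /mapP [v Hv ->]; rewrite Lof_code -mem_enum.
Qed.

Lemma mv_nat (X : {set T}) L : mutual_visibility (@ccc_adj 3) X ->
  all (fun c => c < 24) L -> (forall v, (code v \in L) = (v \in X)) ->
  forall a b, a \in L -> b \in L -> visb (bvec L) a b.
Proof.
move=> HX HL HB a b Ha Hb.
have ha := allP HL a Ha; have hb := allP HL b Hb.
rewrite -goodn_visb // -{1 2 3}(decodeK ha) -{1 2}(decodeK hb).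
apply/(visibleE _ _ HB); apply: HX; by rewrite -HB decodeK.
Qed.

Lemma no_big (X : {set T}) : mutual_visibility (@ccc_adj 3) X -> #|X| <= 6.
Proof.
move=> HX; rewrite leqNgt; apply/negP => H7.
apply: (no7 (L := Lof X)).
- rewrite /Lof; apply: sorted_filter; [exact: ltn_trans | exact: iota_ltn_sorted].
- exact: Lof_lt.
- exact: leq_trans H7 (card_Lof X).
exact: mv_nat HX (Lof_lt X) (Lof_code X).
Qed.

Lemma code_v3 l b0 b1 b2 : l < 3 ->
  code (v3 l b0 b1 b2) = l + 3 * (b0 + 2 * b1 + 4 * b2).
Proof. by move=> hl; rewrite /code /v3 /= inordK // /xcode /bits3 !ffunE. Qed.

Definition Sset : {set T} :=
  [set v3 0 true false false; v3 1 true true false; v3 1 false false false;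
       v3 0 false false true; v3 1 true true true; v3 0 false true true].
Definition Sseq : seq T :=
  [:: v3 0 true false false; v3 1 true true false; v3 1 false false false;
      v3 0 false false true; v3 1 true true true; v3 0 false true true].
Definition LS := [:: 3; 10; 1; 12; 22; 18].

Lemma LS_E : map code Sseq = LS.
Proof. by rewrite /= !code_v3. Qed.

Lemma LS_code v : (code v \in LS) = (v \in Sset).
Proof. by rewrite -LS_E (mem_map code_inj) /Sset /Sseq !inE !orbA. Qed.

Lemma LS_vis : all (fun a => all (visb (bvec LS) a) LS) LS.
Proof. by vm_compute. Qed.

Lemma S_mv : mutual_visibility (@ccc_adj 3) Sset.
Proof.
move=> x y Hx Hy.
rewrite -LS_code in Hx; rewrite -LS_code in Hy.
have := allP (allP LS_vis _ Hx) _ Hy.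
rewrite -goodn_visb ?code_lt // => H.
exact: (proj2 (visibleE (B := mem LS) x y LS_code) H).
Qed.

Lemma S_card : 6 <= #|Sset|.
Proof.
rewrite cardE; have -> : 6 = size Sseq by [].
apply: uniq_leq_size.
  by rewrite -(map_inj_uniq code_inj) LS_E.
by move=> v Hv; rewrite mem_enum -LS_code -LS_E map_f.
Qed.

Theorem mainTheorem9 :
  mu (@ccc_adj 3) = 6 /\
  mutual_visibility (@ccc_adj 3)
    [set v3 0 true false false; v3 1 true true false; v3 1 false false false;
         v3 0 false false true; v3 1 true true true; v3 0 false true true].
Proof.
split; last exact: S_mv.
apply/eqP; rewrite eqn_leq; apply/andP; split.
  by apply/bigmax_leqP => X /asboolP; apply: no_big.
apply: leq_trans S_card _; apply: (leq_bigmax_cond (F := fun X : {set T} => #|X|)).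
exact/asboolP/S_mv.
Qed.
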